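(* When the critical distance is $\beta=1$, the Best Response problem for celebrity games is solvable in polynomial time.
   Context: A celebrity game $\Gamma=\langle V,(w_u)_{u\in V},\alpha,\beta\rangle$ consists of a set of players $V=\{1,\dots,n\}$, celebrity weights $w_u>0$, a link cost $\alpha>0$ and a critical distance $\beta$ with $1\le\beta\le n-1$. A strategy of player $u$ is a set $S_u\subseteq V\setminus\{u\}$; a strategy profile is $S=(S_1,\dots,S_n)$; its outcome graph $G[S]$ is the undirected graph on $V$ with edge set $\{\{u,v\}: u\in S_v\text{ or }v\in S_u\}$. With $d_G$ the graph distance (infinite between different connected components), the cost of player $u$ is $c_u(S)=\alpha|S_u|+\sum_{v:\,d_{G[S]}(u,v)>\beta}w_v$. For a profile $S$ and a strategy $S'_u$ of $u$, $(S_{-u},S'_u)$ denotes the profile obtained by replacing $S_u$ with $S'_u$. The Best Response problem: given a celebrity game $\Gamma$ (with rational parameters), a strategy profile $S$ and a player $u$, compute a strategy $S'_u\subseteq V\setminus\{u\}$ minimizing $c_u(S_{-u},S'_u)$. *)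

(* Defs.v *)
From mathcomp Require Import all_boot all_order all_algebra.
Set Implicit Arguments. Unset Strict Implicit. Unset Printing Implicit Defensive.
Import Order.TTheory GRing.Theory Num.Theory.
Local Open Scope ring_scope.

Definition adj (n : nat) (S : {ffun 'I_n -> {set 'I_n}}) : rel 'I_n :=
  fun x y => (y \in S x) || (x \in S y).

Fixpoint ball (n : nat) (e : rel 'I_n) (k : nat) (u : 'I_n) : {set 'I_n} :=
  match k with
  | 0 => [set u]
  | k'.+1 => ball e k' u :|: [set y | [exists x in ball e k' u, e x y]]
  end.

Definition far (n : nat) (S : {ffun 'I_n -> {set 'I_n}}) (beta : nat)
  (u v : 'I_n) : bool := v \notin ball (adj S) beta u.

Definition cost (n : nat) (w : 'I_n -> rat) (alpha : rat) (beta : nat)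
  (S : {ffun 'I_n -> {set 'I_n}}) (u : 'I_n) : rat :=
  alpha * (#|S u|)%:R + \sum_(v | far S beta u v) w v.

Definition upd (n : nat) (S : {ffun 'I_n -> {set 'I_n}}) (u : 'I_n)
  (X : {set 'I_n}) : {ffun 'I_n -> {set 'I_n}} :=
  [ffun x => if x == u then X else S x].

Definition best_response (n : nat) (w : 'I_n -> rat) (alpha : rat)
  (beta : nat) (S : {ffun 'I_n -> {set 'I_n}}) (u : 'I_n) (X : {set 'I_n}) :=
  u \notin X /\
  forall Y : {set 'I_n}, u \notin Y ->
    cost w alpha beta (upd S u X) u <= cost w alpha beta (upd S u Y) u.

(* Machine model: a unit-cost RAM whose registers hold rationals,      *)
(* with indirect addressing, addition, subtraction and comparisons     *)
(* (no multiplication/division, so unit cost is polynomially faithful  *)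

Definition mem := nat -> rat.

Inductive expr :=
  | EConst of rat
  | ELoad of expr
  | EAdd of expr & expr
  | ESub of expr & expr.

Inductive cond :=
  | CLt of expr & expr
  | CEq of expr & expr.

Inductive cmd :=
  | Skip
  | Assign of expr & expr
  | Seq of cmd & cmd
  | If of cond & cmd & cmd
  | While of cond & cmd.

Fixpoint eval (e : expr) (m : mem) : rat :=
  match e with
  | EConst q => q
  | ELoad a => m (Num.truncn (eval a m))
  | EAdd a b => eval a m + eval b m
  | ESub a b => eval a m - eval b m
  end.

Definition test (c : cond) (m : mem) : bool :=
  match c with
  | CLt a b => eval a m < eval b m
  | CEq a b => eval a m == eval b m
  end.

Definition config := (seq cmd * mem)%type.

Definition step (cf : config) : config :=
  let: (k, m) := cf in
  match k with
  | [::] => ([::], m)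
  | Skip :: k' => (k', m)
  | Assign a e :: k' =>
      let i := Num.truncn (eval a m) in
      let v := eval e m in
      (k', fun j => if j == i then v else m j)
  | Seq c1 c2 :: k' => (c1 :: c2 :: k', m)
  | If b c1 c2 :: k' => ((if test b m then c1 else c2) :: k', m)
  | While b c :: k' =>
      if test b m then (c :: While b c :: k', m) else (k', m)
  end.

(* Input encoding of an instance (beta = 1 is fixed by the problem):
   m 0 = n, m 1 = u, m 2 = alpha, m (3+i) = w_i,
   m (3 + n + n*x + y) = 1 if y \in S_x, 0 otherwise; all else 0. *)
Definition encode (n : nat) (w : 'I_n -> rat) (alpha : rat)
  (S : {ffun 'I_n -> {set 'I_n}}) (u : 'I_n) : mem :=
  fun j =>
    if j == 0%N then n%:R
    else if j == 1%N then (nat_of_ord u)%:R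
    else if j == 2%N then alpha
    else if (3 <= j < 3 + n)%N then
      (if insub (j - 3)%N is Some i then w i else 0)
    else if (3 + n <= j < 3 + n + n * n)%N then
      (if insub ((j - 3 - n) %/ n)%N is Some x then
         if insub ((j - 3 - n) %% n)%N is Some y then
           (if y \in S x then 1 else 0)
         else 0
       else 0)
    else 0.

Definition decode (n : nat) (m : mem) : {set 'I_n} :=
  [set i : 'I_n | m (3 + n + n * n + i)%N == 1].

Definition bitlen (q : rat) : nat :=
  (trunc_log 2 (`|numq q|%N).+1 + trunc_log 2 (`|denq q|%N).+1 + 2)%N.

Definition insize (n : nat) (w : 'I_n -> rat) (alpha : rat) : nat :=
  (n + n * n + bitlen alpha + \sum_(i < n) bitlen (w i))%N.

(* Main.v *)
Require Import Defs.
From mathcomp Require Import all_boot all_order all_algebra.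
From mathcomp Require Import zify lra.
From Stdlib Require Import FunctionalExtensionality.
Import Order.TTheory GRing.Theory Num.Theory.
Local Open Scope ring_scope.

Definition upd_m (m : Defs.mem) (i : nat) (v : rat) : Defs.mem :=
  fun j => if j == i then v else m j.

Definition runsle (c : cmd) (m m' : Defs.mem) (B : nat) :=
  exists s, (s <= B)%N /\ forall k, iter s step (c :: k, m) = (k, m').

Lemma run_assign a e m i v : Num.truncn (eval a m) = i -> eval e m = v ->
  runsle (Assign a e) m (upd_m m i v) 1.
Proof. move=> Hi Hv; exists 1%N; split => // k. by rewrite /= Hi Hv. Qed.

Lemma run_skip m : runsle Skip m m 1.
Proof. by exists 1%N; split. Qed.

Lemma run_seq c1 c2 m1 m2 m3 B1 B2 B : runsle c1 m1 m2 B1 -> runsle c2 m2 m3 B2 ->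
  (B1 + B2 < B)%N -> runsle (Seq c1 c2) m1 m3 B.
Proof.
move=> [s1 [h1 H1]] [s2 [h2 H2]] hB; exists (s2 + (s1 + 1))%N; split; first lia.
by move=> k; rewrite !iterD /= H1 H2.
Qed.

Lemma run_if_t b c1 c2 m m' B B' : test b m -> runsle c1 m m' B ->
  (B < B')%N -> runsle (If b c1 c2) m m' B'.
Proof.
move=> hb [s [h H]] hB; exists (s + 1)%N; split; first lia.
by move=> k; rewrite iterD /= hb H.
Qed.

Lemma run_if_f b c1 c2 m m' B B' : ~~ test b m -> runsle c2 m m' B ->
  (B < B')%N -> runsle (If b c1 c2) m m' B'.
Proof.
move=> hb [s [h H]] hB; exists (s + 1)%N; split; first lia.
by move=> k; rewrite iterD /= (negbTE hb) H.
Qed.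

Lemma run_weak c m m' B B' : (B <= B')%N -> runsle c m m' B -> runsle c m m' B'.
Proof. move=> hB [s [h H]]; exists s; split => //; exact: leq_trans hB. Qed.

Lemma run_while b c (ms : nat -> Defs.mem) N B :
  (forall j, (j < N)%N -> test b (ms j)) -> ~~ test b (ms N) ->
  (forall j, (j < N)%N -> runsle c (ms j) (ms j.+1) B) ->
  runsle (While b c) (ms 0%N) (ms N) (N * B.+2).+1.
Proof.
move=> ht hf hc.
suff : forall j, (j <= N)%N -> runsle (While b c) (ms (N - j)%N) (ms N) (j * B.+2).+1.
  by move=> /(_ N (leqnn N)); rewrite subnn.
elim=> [_|j IH hj].
  exists 1%N; split => // k; by rewrite subn0 /= (negbTE hf).
have hlt : (N - j.+1 < N)%N by lia.
have [s1 [h1 H1]] := hc _ hlt.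
have [s2 [h2 H2]] := IH (ltnW hj).
have e : (N - j.+1).+1 = (N - j)%N by lia.
rewrite e in H1.
exists (s2 + (s1 + 1))%N; split.
  rewrite mulSn; lia.
move=> k; rewrite !iterD /= ht // H1 H2 //.
Qed.

Lemma tn k : Num.truncn (k%:R : rat) = k.
Proof. exact: natrK. Qed.
Lemma tnD a b : Num.truncn (a%:R + b%:R : rat) = (a + b)%N.
Proof. by rewrite -natrD tn. Qed.

Definition C (k : nat) : expr := EConst k%:R.
Definition L := ELoad.
Definition A1 := Assign (EAdd (C 3) (L (C 0))) (L (C 3)).
Definition A2 := Assign (EAdd (EAdd (C 4) (L (C 0))) (L (C 0))) (L (C 4)).
Definition A3 := Assign (C 3) (C 0).
Definition A4 := Assign (C 4) (EAdd (EAdd (C 3) (L (C 0))) (L (C 0))).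
Definition A5b := Seq (Assign (C 4) (EAdd (L (C 4)) (L (C 0))))
                      (Assign (C 3) (EAdd (L (C 3)) (C 1))).
Definition A5 := While (CLt (L (C 3)) (L (C 0))) A5b.
Definition A6 := Assign (L (C 4)) (L (C 0)).
Definition A7 := Assign (C 0) (L (C 4)).
Definition A8 := Assign (C 3) (L (EAdd (C 3) (L (L (C 0))))).
Definition A9 := Assign (C 4) (L (EAdd (EAdd (C 4) (L (L (C 0)))) (L (L (C 0))))).
Definition B1 := Assign (EAdd (L (C 0)) (C 1)) (C 0).
Definition B2 := Assign (EAdd (L (C 0)) (C 2)) (EAdd (C 3) (L (L (C 0)))).
Definition Ii := L (EAdd (L (C 0)) (C 1)).
Definition Pp := L (EAdd (L (C 0)) (C 2)).
Definition Nn := L (L (C 0)).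
Definition Bif := If (CEq Ii (L (C 1))) Skip
   (If (CEq (L (EAdd Pp (L (C 1)))) (C 1)) Skip
     (If (CLt (L (C 2)) (L (EAdd (C 3) Ii)))
         (Assign (EAdd (ESub (L (C 0)) Nn) Ii) (C 1)) Skip)).
Definition Bupd := Seq (Assign (EAdd (L (C 0)) (C 2)) (EAdd Pp Nn))
                       (Assign (EAdd (L (C 0)) (C 1)) (EAdd Ii (C 1))).
Definition B3 := While (CLt Ii Nn) (Seq Bif Bupd).
Definition Prog := Seq (Seq A1 (Seq A2 (Seq A3 (Seq A4 (Seq A5 (Seq A6 (Seq A7
   (Seq A8 A9)))))))) (Seq B1 (Seq B2 B3)).

Section Run.
Variables (n : nat) (w : 'I_n -> rat) (alpha : rat)
  (S : {ffun 'I_n -> {set 'I_n}}) (u : 'I_n).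
Hypothesis n2 : (2 <= n)%N.
Local Notation E := (encode w alpha S u).

Lemma E0 : E 0%N = n%:R. Proof. by []. Qed.
Lemma E1 : E 1%N = (u : nat)%:R. Proof. by []. Qed.
Lemma E2 : E 2%N = alpha. Proof. by []. Qed.
Lemma Ew (i : 'I_n) : E (3 + i)%N = w i.
Proof.
rewrite /encode.
have -> : (3 + i == 0)%N = false by lia.
have -> : (3 + i == 1)%N = false by lia.
have -> : (3 + i == 2)%N = false by lia.
have -> : (3 <= 3 + i < 3 + n)%N by have := ltn_ord i; lia.
have -> : (3 + i - 3 = i)%N by lia.
rewrite insubT /= => [|h]; first exact: ltn_ord.
by congr w; apply: val_inj.
Qed.
Lemma ES (x y : 'I_n) : E (3 + n + n * x + y)%N = if y \in S x then 1 else 0.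
Proof.
have hx := ltn_ord x; have hy := ltn_ord y.
have hxn : (n * x + n <= n * n)%N by rewrite -mulnSr leq_mul.
rewrite /encode.
have -> : (3 + n + n * x + y == 0)%N = false by lia.
have -> : (3 + n + n * x + y == 1)%N = false by lia.
have -> : (3 + n + n * x + y == 2)%N = false by lia.
have -> : (3 <= 3 + n + n * x + y < 3 + n)%N = false by lia.
have -> : (3 + n <= 3 + n + n * x + y < 3 + n + n * n)%N by lia.
have -> : (3 + n + n * x + y - 3 - n = x * n + y)%N by lia.
have n0 : (0 < n)%N by lia.
rewrite divnMDl // modnMDl (divn_small hy) (modn_small hy) addn0.
case: insubP => [x' _ ex|]; last by rewrite ltn_ord.
case: insubP => [y' _ ey|]; last by rewrite ltn_ord.
have -> : x' = x by apply: val_inj.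
by have -> : y' = y by apply: val_inj.
Qed.
Lemma Ehi j : (3 + n + n * n <= j)%N -> E j = 0.
Proof.
move=> hj; rewrite /encode.
have -> : (j == 0)%N = false by lia.
have -> : (j == 1)%N = false by lia.
have -> : (j == 2)%N = false by lia.
have -> : (3 <= j < 3 + n)%N = false by lia.
by have -> : (3 + n <= j < 3 + n + n * n)%N = false by lia.
Qed.
End Run.

Lemma upd_eq m i v j : j = i -> upd_m m i v j = v.
Proof. by move=> ->; rewrite /upd_m eqxx. Qed.
Lemma upd_ne m i v j : j <> i -> upd_m m i v j = m j.
Proof. by move=> /eqP h; rewrite /upd_m (negbTE h). Qed.
Arguments upd_m : simpl never.
Arguments encode : simpl never.

Lemma evC k m : eval (C k) m = k%:R. Proof. by []. Qed.
Lemma evL e m : eval (L e) m = m (Num.truncn (eval e m)). Proof. by []. Qed.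
Lemma evA a b m : eval (EAdd a b) m = eval a m + eval b m. Proof. by []. Qed.
Lemma evS a b m : eval (ESub a b) m = eval a m - eval b m. Proof. by []. Qed.
Lemma tLt a b m : test (CLt a b) m = (eval a m < eval b m). Proof. by []. Qed.
Lemma tEq a b m : test (CEq a b) m = (eval a m == eval b m). Proof. by []. Qed.
Ltac ev := repeat (rewrite evC || rewrite evL || rewrite evA || rewrite evS || rewrite tLt || rewrite tEq).

Lemma run_asg a e m m' : m' = upd_m m (Num.truncn (eval a m)) (eval e m) ->
  runsle (Assign a e) m m' 1.
Proof. move=> ->; exact: run_assign. Qed.

Ltac meq := apply: functional_extensionality => jj; rewrite /upd_m;
  repeat (case: ifP => /eqP; intros; try subst); try lia; try done;
  try (rewrite -?natrD ?natr1; congr (_%:R); rewrite ?mulnS; lia).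

Ltac rd := repeat match goal with |- context [upd_m ?m ?i ?v ?j] =>
  first [rewrite (@upd_eq m i v j); [|lia] | rewrite (@upd_ne m i v j); [|lia]] end.

Lemma run_seqE c1 c2 m1 m2 m3 B1 B2 : runsle c1 m1 m2 B1 -> runsle c2 m2 m3 B2 ->
  runsle (Seq c1 c2) m1 m3 (B1 + B2).+1.
Proof. move=> h1 h2; exact: run_seq h1 h2 _. Qed.

Arguments run_asg {a e m m'}.
Arguments run_seqE {c1 c2 m1 m2 m3 B1 B2}.
Arguments run_weak {c m m' B B'}.
Ltac go := do 5 (rd; rewrite ?tn -?natrD ?tn); try done.

Section PhaseA.
Variables (n : nat) (w : 'I_n -> rat) (alpha : rat)
  (S : {ffun 'I_n -> {set 'I_n}}) (u : 'I_n).
Hypothesis n2 : (2 <= n)%N.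
Local Notation E := (encode w alpha S u).
Definition m1 := upd_m E (3 + n) (E 3%N).
Definition m2 := upd_m m1 (4 + n + n) (E 4%N).
Definition MA k := upd_m (upd_m m2 3 k%:R) 4 (3 + n + n + n * k)%N%:R.
Local Notation Z := (3 + n + n + n * n)%N.
Definition m6 := upd_m (MA n) Z n%:R.
Definition m7 := upd_m m6 0 Z%:R.
Definition m8 := upd_m m7 3 (E 3%N).
Definition m9 := upd_m m8 4 (E 4%N).

Lemma phaseA : runsle (Seq A1 (Seq A2 (Seq A3 (Seq A4 (Seq A5 (Seq A6 (Seq A7
   (Seq A8 A9)))))))) E m9 (5 * n + 20).
Proof.
have E0 : E 0%N = n%:R by [].
have r1 : runsle A1 E m1 1.
  apply: run_assign; ev; rewrite ?tn ?E0 -?natrD ?tn //.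
have r2 : runsle A2 m1 m2 1.
  apply: run_assign; ev; rewrite ?tn /m1; rd; rewrite ?E0 -?natrD ?tn //.
have r3 : runsle A3 m2 (upd_m m2 3 0%:R) 1 by apply: run_assign; ev; rewrite ?tn.
have r4 : runsle A4 (upd_m m2 3 0%:R) (MA 0) 1.
  apply: run_assign; ev; rewrite ?tn //.
  rewrite /m2 /m1; rd; rewrite E0 muln0 addn0 !natrD //.
have r5 : runsle A5 (MA 0) (MA n) (n * 5).+1.
  apply: run_while => [j hj|| j hj].
  - ev; rewrite ?tn /MA /m2 /m1; rd; by rewrite E0 ltr_nat.
  - ev; rewrite ?tn /MA /m2 /m1; rd; by rewrite E0 ltr_nat ltnn.
  - apply: run_seq; [apply: run_asg; reflexivity | apply: run_asg | by []].
    ev; rewrite ?tn /MA /m2 /m1; rd; rewrite ?E0 ?tnD ?tn. meq.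
have r6 : runsle A6 (MA n) m6 1.
  apply: run_assign; ev; rewrite ?tn /MA /m2 /m1; rd; rewrite ?tn ?E0 //.
have r7 : runsle A7 m6 m7 1.
  apply: run_assign; ev; rewrite ?tn /m6 /MA /m2 /m1; rd; rewrite ?tn ?E0 //.
have r8 : runsle A8 m7 m8 1.
  apply: run_assign; ev; rewrite ?tn /m7 /m6 /MA /m2 /m1; go.
have r9 : runsle A9 m8 m9 1.
  apply: run_assign; ev; rewrite ?tn /m8 /m7 /m6 /MA /m2 /m1; go.
apply: (run_weak _ (run_seqE r1 (run_seqE r2 (run_seqE r3 (run_seqE r4
  (run_seqE r5 (run_seqE r6 (run_seqE r7 (run_seqE r8 r9))))))))).
lia.
Qed.


Local Notation B0 := (3 + n + n * n)%N.
Definition dec (i : nat) : bool :=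
  [&& i != (u : nat), E (3 + n + n * i + u)%N != 1 & alpha < E (3 + i)%N].
Fixpoint OUT k := match k with
  | 0%N => m9
  | k'.+1 => if dec k' then upd_m (OUT k') (B0 + k') 1%:R else OUT k' end.
Definition MB i := upd_m (upd_m (OUT i) (Z + 1) i%:R) (Z + 2) (3 + n + n * i)%N%:R.

Lemma nnL : (n + n <= n * n)%N.
Proof. by have := leq_mul (leqnn n) n2; rewrite muln2 -addnn. Qed.

Lemma OUTS k : OUT k.+1 = if dec k then upd_m (OUT k) (B0 + k) 1%:R else OUT k.
Proof. by []. Qed.

Lemma OUT_lo k j : (j < B0 \/ B0 + k <= j)%N -> OUT k j = m9 j.
Proof.
elim: k => [//|k IH] h /=; case: (dec k); last by apply: IH; lia.
by rewrite upd_ne; [apply: IH|]; lia.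
Qed.

Lemma OUT_hi k i : (i < n)%N -> OUT k (B0 + i) = if (i < k)%N && dec i then 1%:R else E (B0 + i).
Proof.
move=> hi; elim: k => [|k IH] /=.
  have nn := nnL; rewrite /m9 /m8 /m7 /m6 /MA /m2 /m1; by rd.
case hd: (dec k) => /=.
  case: (eqVneq i k) => [->|hik]; first by rewrite upd_eq // ltnSn hd.
  rewrite upd_ne; last by move=> h; apply/eqP: hik; lia.
  by rewrite IH ltnS (leq_eqVlt i k) (negbTE hik).
case: (eqVneq i k) => [eik|hik]; first by rewrite IH eik ltnn ltnSn hd.
by rewrite IH ltnS (leq_eqVlt i k) (negbTE hik).
Qed.

Lemma m9E j : j <> 0%N -> j <> (3 + n)%N -> j <> (4 + n + n)%N -> j <> Z -> m9 j = E j.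
Proof.
move=> h0 h1 h2 h3; rewrite /m9 /m8 /m7 /m6 /MA /m2 /m1.
case: (eqVneq j 4) => [->|h4]; first by rd.
case: (eqVneq j 3) => [->|h5]; first by rd.
by rewrite !upd_ne //; apply/eqP.
Qed.

Section Reads.
Variable i : nat.
Hypothesis hi : (i <= n)%N.
Lemma MB_0 : MB i 0%N = Z%:R.
Proof. rewrite /MB; rd; rewrite OUT_lo; last lia. rewrite /m9 /m8 /m7; by rd. Qed.
Lemma MB_Z : MB i Z = n%:R.
Proof. rewrite /MB; rd; rewrite OUT_lo; last lia. rewrite /m9 /m8 /m7 /m6; by rd. Qed.
Lemma MB_Z1 : MB i (Z + 1)%N = i%:R.
Proof. rewrite /MB; by rd. Qed.
Lemma MB_Z2 : MB i (Z + 2)%N = (3 + n + n * i)%N%:R.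
Proof. rewrite /MB; by rd. Qed.
Lemma MB_E j : (j < B0)%N -> j <> 0%N -> j <> (3 + n)%N -> j <> (4 + n + n)%N ->
  MB i j = E j.
Proof.
move=> hj h0 h1 h2; rewrite /MB; rd; rewrite OUT_lo; last lia.
apply: m9E => //; lia.
Qed.
Lemma MB_1 : MB i 1%N = (u : nat)%:R.
Proof. rewrite MB_E //; lia. Qed.
Lemma MB_2 : MB i 2%N = alpha.
Proof. rewrite MB_E //; lia. Qed.
End Reads.

Lemma Sfacts i : (i < n)%N -> i <> (u : nat) ->
  [/\ (3 + n + n * i + u < B0)%N, (3 + n + n * i + u)%N <> 0%N,
      (3 + n + n * i + u)%N <> (3 + n)%N & (3 + n + n * i + u)%N <> (4 + n + n)%N].
Proof.
move=> hi hiu; have hu := ltn_ord u.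
have h1 : (n * i + n <= n * n)%N by rewrite -mulnSr leq_mul.
split; try lia.
  move: hi hiu h1; case: i => [|i] hi hiu h1; first lia.
  rewrite mulnS; lia.
move: hi hiu h1; case: i => [|[|i]] hi hiu h1; first lia.
  rewrite muln1; lia.
rewrite !mulnS; lia.
Qed.

Lemma body i : (i < n)%N -> runsle (Seq Bif Bupd) (MB i) (MB i.+1) 10.
Proof.
move=> hi; have hin : (i <= n)%N := ltnW hi.
have h0 := MB_0 _ hin; have hZ := MB_Z _ hin; have hZ1 := MB_Z1 _ hin.
have hZ2 := MB_Z2 _ hin; have h1 := MB_1 _ hin; have h2 := MB_2 _ hin.
have nn := nnL.
have hzz : (Z%:R - n%:R + i%:R : rat) = (B0 + i)%N%:R.
  rewrite (_ : Z = B0 + n)%N; last lia.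
  by rewrite natrD addrK -natrD.
pose X := if dec i then upd_m (MB i) (B0 + i) 1%:R else MB i.
have hX : runsle Bif (MB i) X 4.
  rewrite /Bif /X /dec /Ii /Pp /Nn.
  case: (eqVneq i (u : nat)) => [eiu|niu].
    apply: run_if_t; [|apply: run_skip|by []].
    ev; do 6 (rd; rewrite ?tn -?natrD ?tn ?h0 ?hZ ?hZ1 ?hZ2 ?h1 ?h2).
    by rewrite eiu.
  have niu' : i <> (u : nat) by apply/eqP.
  have [sa sb sc sd] := Sfacts _ hi niu'.
  have hS := @MB_E i hin _ sa sb sc sd.
  have hw : MB i (3 + i)%N = E (3 + i)%N by apply: MB_E; lia.
  apply: (@run_if_f _ _ _ _ _ 3); [ | | by []].
    ev; do 6 (rd; rewrite ?tn -?natrD ?tn ?h0 ?hZ ?hZ1 ?hZ2 ?h1 ?h2).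
    by rewrite eqr_nat.
  rewrite /=.
  case: (eqVneq (E (3 + n + n * i + u)%N) 1) => [eS|nS].
    apply: run_if_t;[|apply: run_skip|by []].
    ev; do 6 (rd; rewrite ?tn -?natrD ?tn ?h0 ?hZ ?hZ1 ?hZ2 ?h1 ?h2).
    by rewrite hS eS.
  apply: (@run_if_f _ _ _ _ _ 2); [ | |by []].
    ev; do 6 (rd; rewrite ?tn -?natrD ?tn ?h0 ?hZ ?hZ1 ?hZ2 ?h1 ?h2).
    by rewrite hS.
  rewrite /=.
  case: (boolP (alpha < E (3 + i)%N)) => ha /=.
    apply: run_if_t; [|apply: run_asg|by []].
      ev; do 6 (rd; rewrite ?tn -?natrD ?tn ?h0 ?hZ ?hZ1 ?hZ2 ?h1 ?h2).
      by rewrite hw.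
    ev; do 6 (rd; rewrite ?tn -?natrD ?tn ?h0 ?hZ ?hZ1 ?hZ2 ?h1 ?h2).
    by rewrite hzz tn.
  apply: run_if_f; [|apply: run_skip|by []].
  ev; do 6 (rd; rewrite ?tn -?natrD ?tn ?h0 ?hZ ?hZ1 ?hZ2 ?h1 ?h2).
  by rewrite hw.
have hU : runsle Bupd X (MB i.+1) 3.
  apply: (run_weak _ (run_seqE (run_asg erefl) (run_asg _))); try by [].
  rewrite /X; case hd: (dec i).
    ev; do 8 (rd; rewrite ?tn -?natrD ?tn ?h0 ?hZ ?hZ1 ?hZ2 ?h1 ?h2).
    rewrite /MB OUTS hd; meq.
  ev; do 8 (rd; rewrite ?tn -?natrD ?tn ?h0 ?hZ ?hZ1 ?hZ2 ?h1 ?h2).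
  rewrite /MB OUTS hd; meq.
exact: (run_weak _ (run_seqE hX hU)).
Qed.

Definition m10 := upd_m m9 (Z + 1) 0%:R.

Lemma phaseB : runsle (Seq B1 (Seq B2 B3)) m9 (MB n) (n * 12 + 6).
Proof.
have nn := nnL.
have b1 : runsle B1 m9 m10 1.
  apply: run_assign; ev; rewrite ?tn /m9 /m8 /m7; go.
have b2 : runsle B2 m10 (MB 0) 1.
  apply: run_asg; ev; rewrite ?tn /m10 /m9 /m8 /m7 /m6; go.
  by rewrite /MB muln0 addn0.
have b3 : runsle B3 (MB 0) (MB n) (n * 12).+1.
  apply: run_while => [j hj|| j hj].
  - have hjn : (j <= n)%N := ltnW hj.
    have h0 := MB_0 _ hjn; have hZ := MB_Z _ hjn; have hZ1 := MB_Z1 _ hjn.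
    rewrite /Ii /Nn; ev; do 6 (rewrite ?tn -?natrD ?tn ?h0 ?hZ ?hZ1).
    by rewrite ltr_nat.
  - have h0 := MB_0 _ (leqnn n); have hZ := MB_Z _ (leqnn n); have hZ1 := MB_Z1 _ (leqnn n).
    rewrite /Ii /Nn; ev; do 6 (rewrite ?tn -?natrD ?tn ?h0 ?hZ ?hZ1).
    by rewrite ltr_nat ltnn.
  - exact: body.
apply: (run_weak _ (run_seqE b1 (run_seqE b2 b3))); lia.
Qed.

Lemma decodeMB : decode n (MB n) =
  [set i : 'I_n | [&& (i : nat) != u, u \notin S i & alpha < w i]].
Proof.
have nn := nnL.
apply/setP => i; have hi := ltn_ord i; rewrite !inE /MB; rd.
rewrite OUT_hi // hi /= Ehi; last lia.
rewrite /dec (@ES n w alpha S u n2 i u). rewrite (@Ew n w alpha S u n2 i).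
have -> : ((if u \in S i then 1 else 0) != 1 :> rat) = (u \notin S i).
  by case: (u \in S i); rewrite ?eqxx //= eq_sym oner_eq0.
case: ifP => _; rewrite ?eqxx // ?eq_sym ?oner_eq0.
exact: n2.
Qed.
End PhaseA.

Lemma far1 (n : nat) (S : {ffun 'I_n -> {set 'I_n}}) (u : 'I_n) (Y : {set 'I_n}) v :
  far (upd S u Y) 1 u v = [&& v != u, v \notin Y & u \notin S v].
Proof.
rewrite /far [ball _ 1 _]/= !inE.
have -> : [exists x in [set u], adj (upd S u Y) x v] = adj (upd S u Y) u v.
  apply/existsP/idP => [[x /andP[/set1P -> h]] //|h].
  by exists u; rewrite set11 h.
rewrite /adj /upd !ffunE (_ : (u == u) = true); last by apply/eqP.
case: (eqVneq v u) => [->|nvu]; first by rewrite /=.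
by rewrite /= negb_or.
Qed.

Lemma best_resp (n : nat) (w : 'I_n -> rat) (alpha : rat)
  (S : {ffun 'I_n -> {set 'I_n}}) (u : 'I_n) :
  0 < alpha -> (forall v, 0 < w v) ->
  best_response w alpha 1 S u [set i : 'I_n | [&& (i : nat) != u, u \notin S i & alpha < w i]].
Proof.
move=> ha hw; split; first by rewrite inE eqxx.
move=> Y uY.
set X := [set i : 'I_n | _].
have cE : forall Z : {set 'I_n}, cost w alpha 1 (upd S u Z) u =
  \sum_v ((if v \in Z then alpha else 0) + (if [&& v != u, v \notin Z & u \notin S v] then w v else 0)).
  move=> Z; rewrite /cost big_split /= -big_mkcond /= sumr_const.
  rewrite /upd ffunE (_ : (u == u) = true) ?mulr_natr; last by apply/eqP.
  rewrite -big_mkcond /=.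
  by congr (_ + _); apply: eq_bigl => v; rewrite far1.
rewrite !cE; apply: ler_sum => v _.
have hv := hw v.
rewrite /X inE.
case: (eqVneq v u) => [evu|nvu] /=.
  rewrite evu eqxx (negbTE uY) /=; lra.
have nvu' : (v : nat) != u := nvu.
rewrite nvu' /=.
case: (boolP (u \in S v)) => huS /=; rewrite ?andbF ?andbT /=.
  case: (v \in Y); lra.
case: (boolP (alpha < w v)) => hav /=; case: (v \in Y) => /=; lra.
Qed.

Theorem proposition10 :
  exists (P : cmd) (c : nat),
    forall (n : nat) (w : 'I_n -> rat) (alpha : rat)
           (S : {ffun 'I_n -> {set 'I_n}}) (u : 'I_n),
      (1 <= n.-1)%N ->
      0 < alpha ->
      (forall v, 0 < w v) ->
      (forall x, x \notin S x) ->
      exists t : nat,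
        (t <= c * (insize w alpha).+1 ^ c)%N /\
        (iter t step ([:: P], encode w alpha S u)).1 = [::] /\
        best_response w alpha 1 S u
          (decode n (iter t step ([:: P], encode w alpha S u)).2).
Proof.
exists Prog, 100%N => n w alpha S u hn ha hw _.
have n2 : (2 <= n)%N by lia.
have [s [hs H]] := run_seqE (phaseA n w alpha S u n2) (phaseB n w alpha S u n2).
exists s; rewrite H /=; split; last split => //.
  have hx : (n <= insize w alpha)%N by rewrite /insize; lia.
  set x := insize w alpha in hx *.
  have e : (x.+1 <= x.+1 ^ 100)%N by rewrite expnS leq_pmulr // expn_gt0.
  move: e; generalize (x.+1 ^ 100)%N => y e.
  lia.
by rewrite (decodeMB n w alpha S u n2); exact: best_resp.
Qed.
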